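(* Consider the forward-Euler DG update of cell means $$\bar{\mathbf u}_j^{n+1}=\bar{\mathbf u}_j^{n}-\frac{\Delta t}{\Delta x}\Big(\hat{\mathbf f}(\mathbf u^n_{jQ},\mathbf u^n_{(j+1)1})-\hat{\mathbf f}(\mathbf u^n_{(j-1)Q},\mathbf u^n_{j1})\Big)+\Delta t\sum_{q=1}^Q w_q\Big(-\sigma_a\mathbf u^n_{jq}+\sigma_s\mathbf r(\mathbf u^n_{jq})+\langle\mathbf b\,S(t^n,x_{jq},\cdot)\rangle\Big),$$ where $\hat{\mathbf f}(\mathbf v,\mathbf w)=\tfrac12\big(\mathbf f(\mathbf v)+\mathbf f(\mathbf w)-(\mathbf w-\mathbf v)\big)$ and $\bar{\mathbf u}^n_j=\frac1{\Delta x}\int_{I_j}\mathbf u_j(t^n,x)\,dx$. Assume $\sigma_a,\sigma_s\ge0$ are constants, $\sigma_t:=\sigma_a+\sigma_s$, $S\ge0$, $k\le 2Q-3$, that all point values $\mathbf u^n_{jq}$ ($q=1,\dots,Q$) together with $\mathbf u^n_{(j-1)Q}$ and $\mathbf u^n_{(j+1)1}$ lie in $\mathcal R_{\mathbf b}$, and that the CFL condition $$\frac{\Delta t}{\Delta x}<w_Q\,(1-\sigma_t\Delta t)$$ holds, where $w_Q$ is the last weight of the $Q$-point Gauss–Lobatto rule on $[-1/2,1/2]$. Then $\bar{\mathbf u}^{n+1}_j\in\mathcal R_{\mathbf b}$. The same conclusion holds with $\mathcal R_{\mathbf b}$ replaced by the numerically realizable set $\mathcal R^{\mathcal Q}_{\mathbf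 b}$ when all angular integrals (in $\mathbf f$, $\mathbf r$, $\langle\mathbf bS\rangle$ and the closure) are replaced by the angular quadrature $\mathcal Q$.
   Context: Setting: slab-geometry kinetic equation $\partial_t\psi+\mu\partial_x\psi+\sigma_a\psi=\sigma_s\mathcal C(\psi)+S$, with collision operator $\mathcal C(\psi)(\mu)=\int_{-1}^1T(\mu,\mu')\psi(\mu')d\mu'-\int_{-1}^1T(\mu',\mu)\psi(\mu)d\mu'$, kernel $T>0$ with $\int_{-1}^1T(\mu',\mu)d\mu'\equiv1$. Notation: $\langle\phi\rangle=\int_{-1}^1\phi\,d\mu$; basis $\mathbf b=(b_0,\dots,b_N)^T$ of bounded functions with $b_0\equiv1$; realizable set $\mathcal R_{\mathbf b}=\{\mathbf u:\exists\phi\ge0,\ \langle\phi\rangle>0,\ \mathbf u=\langle\mathbf b\phi\rangle\}$. Angular quadrature $\mathcal Q$: nodes $\mu_i\in[-1,1]$, weights $w_i>0$, $i=1,\dots,n_{\mathcal Q}$; numerically realizable set $\mathcal R^{\mathcal Q}_{\mathbf b}=\{\mathbf u:\exists f_i>0,\ \mathbf u=\sum_i w_i\mathbf b(\mu_i)f_i\}$. Maxwell–Boltzmann entropy closure: for realizable $\mathbf u$ the ansatz $\hat\psi_{\mathbf u}=\exp(\mathbf b^T\hat{\boldsymbol\alpha}(\mathbf u))$ with $\langle\mathbf b\hat\psi_{\mathbf u}\rangle=\mathbf u$ exists; $\mathbf f(\mathbf u)=\langle\mu\mathbf b\hat\psi_{\mathbf u}\rangle$, $\mathbf r(\mathbf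 u)=\langle\mathbf b\,\mathcal C(\hat\psi_{\mathbf u})\rangle$. Spatial discretization: cells $I_j=(x_{j-1/2},x_{j+1/2})$ of width $\Delta x$ with centers $x_j$; on $I_j$ the approximation $\mathbf u_j(t,x)$ is a polynomial in $x$ of degree at most $k$ (expanded in Legendre polynomials scaled to the cell, so the cell mean is the zeroth coefficient). The $Q$-point Gauss–Lobatto rule on $[-1/2,1/2]$ has nodes $-1/2=y_1<\dots<y_Q=1/2$ and positive weights $w_q$ summing to $1$ (with $w_1=w_Q$), exact for polynomials of degree $\le 2Q-3$; $x_{jq}=x_j+y_q\Delta x$ and $\mathbf u^n_{jq}=\mathbf u_j(t^n,x_{jq})$ (so $\mathbf u^n_{j1}$, $\mathbf u^n_{jQ}$ are the values at the left and right cell edges; for boundary cells the neighbor values are given boundary moment vectors). *)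

(* Defs.v *)
From Stdlib Require Import Reals.
Open Scope R_scope.

(* Vectors in R^{N+1} are modelled as functions nat -> R, only indices 0..N matter. *)

Fixpoint rsum (n : nat) (g : nat -> R) : R :=
  match n with
  | O => 0
  | S n' => rsum n' g + g n
  end.

Definition IntAB (f : R -> R) (a b v : R) : Prop :=
  exists pr : Riemann_integrable f a b, RiemannInt pr = v.

Definition Realizable (N : nat) (b : nat -> R -> R) (u : nat -> R) : Prop :=
  exists phi : R -> R,
    (forall mu, -1 <= mu <= 1 -> 0 <= phi mu) /\
    (exists m, IntAB phi (-1) 1 m /\ 0 < m) /\
    (forall l, (l <= N)%nat -> IntAB (fun mu => b l mu * phi mu) (-1) 1 (u l)).

Definition NumRealizable (N : nat) (b : nat -> R -> R) (nQ : nat)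
  (muQ wQ : nat -> R) (u : nat -> R) : Prop :=
  exists fv : nat -> R,
    (forall i, (1 <= i <= nQ)%nat -> 0 < fv i) /\
    (forall l, (l <= N)%nat -> u l = rsum nQ (fun i => wQ i * b l (muQ i) * fv i)).

Definition ansatz (N : nat) (b : nat -> R -> R) (alpha : nat -> R) (mu : R) : R :=
  exp (sum_f_R0 (fun l => b l mu * alpha l) N).

Definition IsCollision (T : R -> R -> R) (psi Cpsi : R -> R) : Prop :=
  forall mu, -1 <= mu <= 1 ->
    exists g lo,
      IntAB (fun mu' => T mu mu' * psi mu') (-1) 1 g /\
      IntAB (fun mu' => T mu' mu) (-1) 1 lo /\
      Cpsi mu = g - lo * psi mu.

Definition fhat (ff : (nat -> R) -> nat -> R) (v w : nat -> R) (l : nat) : R :=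
  / 2 * (ff v l + ff w l - (w l - v l)).

(* forward-Euler DG update of the cell mean.
   pv q = u^n_{jq} (q = 1..Q), uL = u^n_{(j-1)Q}, uR = u^n_{(j+1)1},
   Sm q = <b S(t^n, x_{jq}, .)> *)
Definition dg_update (Q : nat) (wGL : nat -> R) (dt dx sa ss : R)
  (ff rr : (nat -> R) -> nat -> R) (Sm : nat -> nat -> R)
  (ubar : nat -> R) (pv : nat -> nat -> R) (uL uR : nat -> R) : nat -> R :=
  fun l =>
    ubar l - dt / dx * (fhat ff (pv Q) uR l - fhat ff uL (pv 1%nat) l)
    + dt * rsum Q (fun q => wGL q * (- sa * pv q l + ss * rr (pv q) l + Sm q l)).

Definition fluxQ (N : nat) (b : nat -> R -> R) (nQ : nat) (muQ wQ : nat -> R)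
  (alphaQ : (nat -> R) -> nat -> R) (v : nat -> R) (l : nat) : R :=
  rsum nQ (fun i => wQ i * muQ i * b l (muQ i) * ansatz N b (alphaQ v) (muQ i)).

Definition collQ (T : R -> R -> R) (nQ : nat) (muQ wQ : nat -> R)
  (psi : R -> R) (mu : R) : R :=
  rsum nQ (fun i' => wQ i' * T mu (muQ i') * psi (muQ i'))
  - rsum nQ (fun i' => wQ i' * T (muQ i') mu) * psi mu.

Definition collmomQ (N : nat) (b : nat -> R -> R) (T : R -> R -> R) (nQ : nat)
  (muQ wQ : nat -> R) (alphaQ : (nat -> R) -> nat -> R) (v : nat -> R) (l : nat) : R :=
  rsum nQ (fun i => wQ i * b l (muQ i) *
                    collQ T nQ muQ wQ (ansatz N b (alphaQ v)) (muQ i)).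

Definition srcQ (b : nat -> R -> R) (nQ : nat) (muQ wQ : nat -> R)
  (S : R -> R -> R -> R) (tn : R) (xq : nat -> R) (q l : nat) : R :=
  rsum nQ (fun i => wQ i * b l (muQ i) * S tn (xq q) (muQ i)).

(* Main.v *)
Require Import Defs.
From Stdlib Require Import Reals Lra Lia FunctionalExtensionality IndefiniteDescription.
From Coquelicot Require Coquelicot.
Open Scope R_scope.

Module CV.
Import Coquelicot.Coquelicot.
Lemma IntAB_is_RInt f a b v : IntAB f a b v -> is_RInt f a b v.
Proof.
  intros [pr Hpr]. pose proof (ex_RInt_Reals_1 _ _ _ pr) as ex.
  pose proof (RInt_correct _ _ _ ex) as H. rewrite (RInt_Reals _ _ _ pr), Hpr in H. exact H.
Qed.
Lemma is_RInt_IntAB f a b v : is_RInt f a b v -> IntAB f a b v.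
Proof.
  intros H. assert (ex : ex_RInt f a b) by (exists v; exact H).
  exists (ex_RInt_Reals_0 _ _ _ ex). rewrite <- RInt_Reals. apply is_RInt_unique. exact H.
Qed.
Lemma IntAB_comp_lin f u v a b l : IntAB f (u*a+v) (u*b+v) l -> IntAB (fun y => u * f (u*y+v)) a b l.
Proof.
  intros H. apply is_RInt_IntAB. apply (is_RInt_comp_lin f u v a b l). apply IntAB_is_RInt. exact H.
Qed.
End CV.

Lemma rsum_ext n f g : (forall i, (1 <= i <= n)%nat -> f i = g i) -> rsum n f = rsum n g.
Proof. induction n; simpl; intros H; auto. rewrite IHn by (intros; apply H; lia). rewrite H by lia. reflexivity. Qed.
Lemma rsum_plus n f g : rsum n (fun i => f i + g i) = rsum n f + rsum n g.
Proof. induction n; simpl; [ring|]. rewrite IHn; ring. Qed.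
Lemma rsum_scal n c f : rsum n (fun i => c * f i) = c * rsum n f.
Proof. induction n; simpl; [ring|]. rewrite IHn; ring. Qed.
Lemma rsum_zero n : rsum n (fun _ => 0) = 0.
Proof. induction n; simpl; [ring|]. rewrite IHn; ring. Qed.
Lemma rsum_nonneg n f : (forall i, (1 <= i <= n)%nat -> 0 <= f i) -> 0 <= rsum n f.
Proof. induction n; simpl; intros H; [lra|]. pose proof (H (S n) ltac:(lia)). assert (0 <= rsum n f) by (apply IHn; intros; apply H; lia). lra. Qed.
Lemma rsum_ge_term n f a : (forall i, (1 <= i <= n)%nat -> 0 <= f i) -> (1 <= a <= n)%nat -> f a <= rsum n f.
Proof.
  induction n; simpl; intros H Ha; [lia|].
  destruct (Nat.eq_dec a (S n)) as [->|Hne].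
  - assert (0 <= rsum n f) by (apply rsum_nonneg; intros; apply H; lia). lra.
  - pose proof (H (S n) ltac:(lia)). assert (f a <= rsum n f) by (apply IHn; [intros; apply H|]; lia). lra.
Qed.
Lemma rsum_ge_1n n f : (2 <= n)%nat -> (forall i, (1 <= i <= n)%nat -> 0 <= f i) -> f 1%nat + f n <= rsum n f.
Proof.
  intros Hn H. destruct n as [|n]; [lia|]. simpl.
  assert (f 1%nat <= rsum n f) by (apply rsum_ge_term; [intros; apply H|]; lia). lra.
Qed.
Lemma sum_scal_l c f n : c * sum_f_R0 f n = sum_f_R0 (fun i => c * f i) n.
Proof. induction n; simpl; [ring|]. rewrite <- IHn; ring. Qed.

Section Lin.
Variable J : (R -> R) -> R -> Prop.
Hypothesis J0 : J (fun _ => 0) 0.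
Hypothesis Jlin : forall f g v w l, J f v -> J g w -> J (fun x => f x + l * g x) (v + l * w).
Lemma J_ext f g v w : (forall x, f x = g x) -> v = w -> J f v -> J g w.
Proof. intros H1 H2 H. replace g with f by (apply functional_extensionality; auto). subst; auto. Qed.
Lemma J_scal f v l : J f v -> J (fun x => l * f x) (l * v).
Proof. intros H. eapply J_ext; [| |apply (Jlin _ _ _ _ l J0 H)]; intros; simpl; ring. Qed.
Lemma J_plus f g v w : J f v -> J g w -> J (fun x => f x + g x) (v + w).
Proof. intros H1 H2. eapply J_ext; [| |apply (Jlin _ _ _ _ 1 H1 H2)]; intros; simpl; ring. Qed.
Lemma J_rsum n F v : (forall q, (1<=q<=n)%nat -> J (F q) (v q)) -> J (fun x => rsum n (fun q => F q x)) (rsum n v).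
Proof.
  induction n; intros H; simpl.
  - eapply J_ext; [| |apply J0]; reflexivity.
  - apply J_plus. apply IHn; intros; apply H; lia. apply H; lia.
Qed.
End Lin.

Definition phiG (Q : nat) (w : nat -> R) (A B C a : R) (P Cq Sq : nat -> R -> R) (PL PR : R -> R) (mu : R) : R :=
  rsum Q (fun q => w q * (A * P q mu + B * (Cq q mu + P q mu) + C * Sq q mu))
  - a * (1 + mu) * P Q mu + a * (1 - mu) * PR mu + a * (1 + mu) * PL mu - a * (1 - mu) * P 1%nat mu.

Definition valG (Q : nat) (w : nat -> R) (A B C a : R) (Pv Fv Rv Sv : nat -> R) (PLv FLv PRv FRv : R) : R :=
  rsum Q (fun q => w q * (A * Pv q + B * (Rv q + Pv q) + C * Sv q))
  - a * (Pv Q + Fv Q) + a * (PRv - FRv) + a * (PLv + FLv) - a * (Pv 1%nat - Fv 1%nat).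

Lemma J_phi (J : (R -> R) -> R -> Prop)
  (J0 : J (fun _ => 0) 0)
  (Jlin : forall f g v w l, J f v -> J g w -> J (fun x => f x + l * g x) (v + l * w))
  Q w A B C a (bl : R -> R) (P Cq Sq : nat -> R -> R) (PL PR : R -> R)
  (Pv Fv Rv Sv : nat -> R) (PLv FLv PRv FRv : R) :
  (forall q, (1<=q<=Q)%nat -> J (fun mu => bl mu * P q mu) (Pv q)) ->
  (forall q, (1<=q<=Q)%nat -> J (fun mu => mu * bl mu * P q mu) (Fv q)) ->
  (forall q, (1<=q<=Q)%nat -> J (fun mu => bl mu * Cq q mu) (Rv q)) ->
  (forall q, (1<=q<=Q)%nat -> J (fun mu => bl mu * Sq q mu) (Sv q)) ->
  J (fun mu => bl mu * PL mu) PLv -> J (fun mu => mu * bl mu * PL mu) FLv ->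
  J (fun mu => bl mu * PR mu) PRv -> J (fun mu => mu * bl mu * PR mu) FRv ->
  (1 <= Q)%nat ->
  J (fun mu => bl mu * phiG Q w A B C a P Cq Sq PL PR mu) (valG Q w A B C a Pv Fv Rv Sv PLv FLv PRv FRv).
Proof.
  intros HP HF HR HS HPL HFL HPR HFR HQ.
  assert (Hrs : J (fun mu => rsum Q (fun q => w q * (A*(bl mu*P q mu) + B*(bl mu*Cq q mu + bl mu*P q mu) + C*(bl mu*Sq q mu))))
                  (rsum Q (fun q => w q*(A*Pv q + B*(Rv q + Pv q)+C*Sv q)))).
  { apply (J_rsum J J0 Jlin Q (fun q mu => w q * (A*(bl mu*P q mu) + B*(bl mu*Cq q mu + bl mu*P q mu) + C*(bl mu*Sq q mu)))).
    intros q Hq. apply (J_scal J J0 Jlin).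
    apply (J_plus J Jlin). apply (J_plus J Jlin).
    apply (J_scal J J0 Jlin); auto.
    apply (J_scal J J0 Jlin). apply (J_plus J Jlin); auto.
    apply (J_scal J J0 Jlin); auto. }
  pose proof (J_plus J Jlin _ _ _ _ (HP Q ltac:(lia)) (HF Q ltac:(lia))) as H1.
  pose proof (Jlin _ _ _ _ (-1) HPR HFR) as H2.
  pose proof (J_plus J Jlin _ _ _ _ HPL HFL) as H3.
  pose proof (Jlin _ _ _ _ (-1) (HP 1%nat ltac:(lia)) (HF 1%nat ltac:(lia))) as H4.
  pose proof (Jlin _ _ _ _ (-a) (Jlin _ _ _ _ a (Jlin _ _ _ _ a (Jlin _ _ _ _ (-a) Hrs H1) H2) H3) H4) as K.
  eapply (J_ext J); [| |exact K].
  - intros x. cbv beta. unfold phiG.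
    assert (E : rsum Q (fun q => w q * (A*(bl x*P q x) + B*(bl x*Cq q x + bl x*P q x) + C*(bl x*Sq q x)))
       = bl x * rsum Q (fun q => w q * (A * P q x + B * (Cq q x + P q x) + C * Sq q x))).
    { rewrite <- rsum_scal. apply rsum_ext. intros; ring. }
    rewrite E. ring.
  - unfold valG. ring.
Qed.

Lemma phi_pos Q w A B C a P Cq Sq PL PR mu :
  (2 <= Q)%nat -> (forall q, (1<=q<=Q)%nat -> 0 < w q) -> w 1%nat = w Q ->
  -1 <= mu <= 1 -> 0 <= A -> 0 <= B -> 0 <= C -> 0 <= a ->
  (forall q, (1<=q<=Q)%nat -> 0 <= P q mu) ->
  (forall q, (1<=q<=Q)%nat -> 0 <= Cq q mu + P q mu) ->
  (forall q, (1<=q<=Q)%nat -> 0 <= Sq q mu) ->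
  0 <= PL mu -> 0 <= PR mu -> 0 <= w Q * A - 2 * a ->
  (w Q * A - 2 * a) * P Q mu <= phiG Q w A B C a P Cq Sq PL PR mu.
Proof.
  intros HQ Hw Hsym Hmu HA HB HC Ha HP HCq HS HPL HPR He.
  unfold phiG.
  set (F := fun q => w q * (A * P q mu + B * (Cq q mu + P q mu) + C * Sq q mu)).
  assert (HF : forall q, (1<=q<=Q)%nat -> w q * A * P q mu <= F q).
  { intros q Hq. unfold F. pose proof (Hw q Hq). pose proof (HP q Hq). pose proof (HCq q Hq). pose proof (HS q Hq).
    assert (0 <= w q * (B * (Cq q mu + P q mu) + C * Sq q mu)).
    { apply Rmult_le_pos; [lra|]. apply Rplus_le_le_0_compat; apply Rmult_le_pos; lra. }
    nra. }
  assert (Hs : F 1%nat + F Q <= rsum Q F).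
  { apply rsum_ge_1n; auto. intros q Hq. eapply Rle_trans; [|apply HF; auto].
    pose proof (Hw q Hq). pose proof (HP q Hq). apply Rmult_le_pos; [apply Rmult_le_pos|]; lra. }
  pose proof (HF 1%nat ltac:(lia)). pose proof (HF Q ltac:(lia)).
  pose proof (HP 1%nat ltac:(lia)). pose proof (HP Q ltac:(lia)).
  rewrite Hsym in *.
  assert (0 <= a * (1 - mu) * P Q mu) by (apply Rmult_le_pos; [apply Rmult_le_pos|]; lra).
  assert (0 <= a * (1 - mu) * PR mu) by (apply Rmult_le_pos; [apply Rmult_le_pos|]; lra).
  assert (0 <= a * (1 + mu) * PL mu) by (apply Rmult_le_pos; [apply Rmult_le_pos|]; lra).
  assert (0 <= (w Q * A - 2 * a) * P 1%nat mu) by (apply Rmult_le_pos; lra).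
  assert (0 <= a * (1 + mu) * P 1%nat mu) by (apply Rmult_le_pos; [apply Rmult_le_pos|]; lra).
  assert (w Q * A * P 1%nat mu - a * (1 - mu) * P 1%nat mu = (w Q * A - 2 * a) * P 1%nat mu + a * (1 + mu) * P 1%nat mu) by ring.
  assert (w Q * A * P Q mu - a * (1 + mu) * P Q mu - (w Q * A - 2 * a) * P Q mu = a * (1 - mu) * P Q mu) by ring.
  lra.
Qed.

Lemma val_id Q w sa ss dt dx Pv Fv Rv Sv PLv FLv PRv FRv ub :
  ub = rsum Q (fun q => w q * Pv q) ->
  ub - dt/dx * (/2*(Fv Q + FRv - (PRv - Pv Q)) - /2*(FLv + Fv 1%nat - (Pv 1%nat - PLv)))
   + dt * rsum Q (fun q => w q * (- sa * Pv q + ss * Rv q + Sv q))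
  = valG Q w (1 - (sa+ss)*dt) (dt*ss) dt (dt/dx*/2) Pv Fv Rv Sv PLv FLv PRv FRv.
Proof.
  intros ->. unfold valG.
  rewrite (rsum_ext Q (fun q => w q * ((1 - (sa+ss)*dt) * Pv q + dt*ss * (Rv q + Pv q) + dt * Sv q)) (fun q => w q * Pv q + dt * (w q * (- sa * Pv q + ss * Rv q + Sv q))))
    by (intros; ring).
  rewrite rsum_plus, rsum_scal. ring.
Qed.

Lemma IntAB_0 a b : IntAB (fun _ => 0) a b 0.
Proof. exists (RiemannInt_P14 a b 0). pose proof (RiemannInt_P15 (RiemannInt_P14 a b 0)) as H. simpl in H |- *. unfold fct_cte in H. rewrite H. ring. Qed.
Lemma IntAB_lin a b f g v w l : IntAB f a b v -> IntAB g a b w -> IntAB (fun x => f x + l * g x) a b (v + l * w).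
Proof. intros [p1 H1] [p2 H2]. exists (RiemannInt_P10 l p1 p2). rewrite (RiemannInt_P13 p1 p2), H1, H2. reflexivity. Qed.
Lemma IntAB_unique f a b v w : IntAB f a b v -> IntAB f a b w -> v = w.
Proof. intros [p1 H1] [p2 H2]. subst. apply RiemannInt_P5. Qed.
Lemma IntAB_nonneg f a b v : a <= b -> (forall x, a < x < b -> 0 <= f x) -> IntAB f a b v -> 0 <= v.
Proof.
  intros Hab H [p Hp]. subst. pose proof (RiemannInt_P19 (RiemannInt_P14 a b 0) p Hab) as K.
  rewrite (RiemannInt_P15 (RiemannInt_P14 a b 0)) in K. assert (0 * (b - a) = 0) by ring. rewrite H0 in K. apply K.
  intros; unfold fct_cte; auto.
Qed.

Lemma ubar_id Q (yGL wGL : nat -> R)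
  (Hexact : forall m, (m <= 2 * Q - 3)%nat ->
      IntAB (fun y => y ^ m) (- / 2) (/ 2) (rsum Q (fun q => wGL q * yGL q ^ m)))
  k (Hk : (k <= 2 * Q - 3)%nat) (cl : nat -> R) xj dx ubl (Hdx : 0 < dx)
  (H : IntAB (fun x => sum_f_R0 (fun m => cl m * x ^ m) k) (xj - dx / 2) (xj + dx / 2) (dx * ubl)) :
  ubl = rsum Q (fun q => wGL q * sum_f_R0 (fun m => cl m * (xj + yGL q * dx) ^ m) k).
Proof.
  set (J' := fun f v => IntAB f (- / 2) (/ 2) v).
  assert (J0 : J' (fun _ => 0) 0) by apply IntAB_0.
  assert (Jlin : forall f g v w l, J' f v -> J' g w -> J' (fun x => f x + l * g x) (v + l * w))
    by (intros; apply IntAB_lin; auto).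
  set (Good := fun f => J' f (rsum Q (fun q => wGL q * f (yGL q)))).
  assert (Gscal : forall f c, Good f -> Good (fun y => c * f y)).
  { intros f c Hf. unfold Good. eapply (J_ext J'); [| |apply (J_scal J' J0 Jlin _ _ c Hf)].
    intros; reflexivity. rewrite <- rsum_scal. apply rsum_ext; intros; ring. }
  assert (Gsum : forall n F, (forall i, (i <= n)%nat -> Good (F i)) -> Good (fun y => sum_f_R0 (fun i => F i y) n)).
  { induction n; intros F HF.
    - eapply (J_ext J'); [| |apply (HF 0%nat ltac:(lia))]; intros; reflexivity.
    - unfold Good. eapply (J_ext J'); [| |apply (J_plus J' Jlin _ _ _ _ (IHn F ltac:(intros; apply HF; lia)) (HF (S n) ltac:(lia)))].
      intros; reflexivity. rewrite <- rsum_plus. apply rsum_ext; intros; simpl; ring. }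
  set (G := fun y => sum_f_R0 (fun m => cl m * (xj + y * dx) ^ m) k).
  assert (HG : Good G).
  { assert (Hd : Good (fun y => sum_f_R0 (fun m => sum_f_R0 (fun i =>
              (cl m * (Binomial.C m i * xj ^ i * dx ^ (m - i))) * y ^ (m - i)) m) k)).
    { apply (Gsum k (fun m y => sum_f_R0 (fun i => (cl m * (Binomial.C m i * xj ^ i * dx ^ (m - i))) * y ^ (m - i)) m)).
      intros m Hm. apply (Gsum m (fun i y => (cl m * (Binomial.C m i * xj ^ i * dx ^ (m - i))) * y ^ (m - i))).
      intros i Hi. apply Gscal. apply Hexact. lia. }
    unfold Good. eapply (J_ext J'); [| |exact Hd].
    - intros y. unfold G. apply sum_eq. intros m Hm. rewrite binomial. rewrite sum_scal_l.
      apply sum_eq. intros i Hi. rewrite Rpow_mult_distr. ring.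
    - apply rsum_ext. intros q Hq. f_equal. unfold G. apply sum_eq. intros m Hm. rewrite binomial. rewrite sum_scal_l.
      apply sum_eq. intros i Hi. rewrite Rpow_mult_distr. ring. }
  assert (H2 : IntAB (fun y => dx * sum_f_R0 (fun m => cl m * (dx * y + xj) ^ m) k) (- / 2) (/ 2) (dx * ubl)).
  { apply (CV.IntAB_comp_lin (fun x => sum_f_R0 (fun m => cl m * x ^ m) k)).
    replace (dx * - / 2 + xj) with (xj - dx / 2) by field.
    replace (dx * / 2 + xj) with (xj + dx / 2) by field. exact H. }
  pose proof (J_scal J' J0 Jlin _ _ dx HG) as H3.
  assert (H4 : IntAB (fun y => dx * G y) (- / 2) (/ 2) (dx * ubl)).
  { eapply (J_ext J'); [| |exact H2]; [|reflexivity]. intros y. unfold G. f_equal. apply sum_eq. intros; f_equal. f_equal. ring. }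
  pose proof (IntAB_unique _ _ _ _ _ H3 H4) as E.
  apply (Rmult_eq_reg_l dx); [|lra]. rewrite <- E. reflexivity.
Qed.

Theorem mainTheorem3
  (* moment basis b_0..b_N, bounded, b_0 = 1 *)
  (N : nat) (b : nat -> R -> R)
  (Hb0 : forall mu, b 0%nat mu = 1)
  (Hbbd : forall l, (l <= N)%nat -> exists M, forall mu, -1 <= mu <= 1 -> Rabs (b l mu) <= M)
  (* collision kernel *)
  (T : R -> R -> R)
  (HTpos : forall mu mu', -1 <= mu <= 1 -> -1 <= mu' <= 1 -> 0 < T mu mu')
  (HTnorm : forall mu, -1 <= mu <= 1 -> IntAB (fun mu' => T mu' mu) (-1) 1 1)
  (* physical parameters and source *)
  (sa ss : R) (Hsa : 0 <= sa) (Hss : 0 <= ss)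
  (Src : R -> R -> R -> R) (HS : forall t x mu, 0 <= Src t x mu)
  (* Gauss-Lobatto rule on [-1/2,1/2]: nodes y_1..y_Q, weights w_1..w_Q *)
  (Q : nat) (yGL wGL : nat -> R)
  (HQ : (2 <= Q)%nat)
  (Hy1 : yGL 1%nat = - / 2) (HyQ : yGL Q = / 2)
  (Hyinc : forall q, (1 <= q < Q)%nat -> yGL q < yGL (S q))
  (Hwpos : forall q, (1 <= q <= Q)%nat -> 0 < wGL q)
  (Hwsum : rsum Q wGL = 1)
  (Hwsym : wGL 1%nat = wGL Q)
  (Hexact : forall m, (m <= 2 * Q - 3)%nat ->
      IntAB (fun y => y ^ m) (- / 2) (/ 2) (rsum Q (fun q => wGL q * yGL q ^ m)))
  (* DG data on cell I_j : u_j(t^n,x) = sum_{m<=k} c l m x^m (component l) *)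
  (k : nat) (Hk : (k <= 2 * Q - 3)%nat)
  (c : nat -> nat -> R) (xj dx dt tn : R)
  (Hdx : 0 < dx) (Hdt : 0 < dt)
  (ubar : nat -> R)
  (Hubar : forall l, (l <= N)%nat ->
      IntAB (fun x => sum_f_R0 (fun m => c l m * x ^ m) k)
            (xj - dx / 2) (xj + dx / 2) (dx * ubar l))
  (* neighbour edge values u^n_{(j-1)Q}, u^n_{(j+1)1} *)
  (uL uR : nat -> R)
  (* CFL condition *)
  (HCFL : dt / dx < wGL Q * (1 - (sa + ss) * dt)) :
  let xq := fun q => xj + yGL q * dx in
  let pv := fun q l => sum_f_R0 (fun m => c l m * xq q ^ m) k in
  (* Part 1: exact angular integrals *)
  (forall (alpha : (nat -> R) -> nat -> R) (ff rr : (nat -> R) -> nat -> R)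
          (Sm : nat -> nat -> R),
     (forall u, Realizable N b u -> forall l, (l <= N)%nat ->
        IntAB (fun mu => b l mu * ansatz N b (alpha u) mu) (-1) 1 (u l)) ->
     (forall u, Realizable N b u -> forall l, (l <= N)%nat ->
        IntAB (fun mu => mu * b l mu * ansatz N b (alpha u) mu) (-1) 1 (ff u l)) ->
     (forall u, Realizable N b u -> exists Cpsi,
        IsCollision T (ansatz N b (alpha u)) Cpsi /\
        forall l, (l <= N)%nat -> IntAB (fun mu => b l mu * Cpsi mu) (-1) 1 (rr u l)) ->
     (forall q, (1 <= q <= Q)%nat -> forall l, (l <= N)%nat ->
        IntAB (fun mu => b l mu * Src tn (xq q) mu) (-1) 1 (Sm q l)) ->
     (forall q, (1 <= q <= Q)%nat -> Realizable N b (pv q)) ->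
     Realizable N b uL -> Realizable N b uR ->
     Realizable N b (dg_update Q wGL dt dx sa ss ff rr Sm ubar pv uL uR))
  /\
  (* Part 2: angular integrals replaced by the quadrature (muQ, wQ) *)
  (forall (nQ : nat) (muQ wQ : nat -> R) (alphaQ : (nat -> R) -> nat -> R),
     (1 <= nQ)%nat ->
     (forall i, (1 <= i <= nQ)%nat -> -1 <= muQ i <= 1) ->
     (forall i, (1 <= i <= nQ)%nat -> 0 < wQ i) ->
     (forall i, (1 <= i <= nQ)%nat ->
        rsum nQ (fun i' => wQ i' * T (muQ i') (muQ i)) = 1) ->
     (forall u, NumRealizable N b nQ muQ wQ u -> forall l, (l <= N)%nat ->
        u l = rsum nQ (fun i => wQ i * b l (muQ i) * ansatz N b (alphaQ u) (muQ i))) ->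
     (forall q, (1 <= q <= Q)%nat -> NumRealizable N b nQ muQ wQ (pv q)) ->
     NumRealizable N b nQ muQ wQ uL -> NumRealizable N b nQ muQ wQ uR ->
     NumRealizable N b nQ muQ wQ
       (dg_update Q wGL dt dx sa ss
          (fluxQ N b nQ muQ wQ alphaQ) (collmomQ N b T nQ muQ wQ alphaQ)
          (srcQ b nQ muQ wQ Src tn xq) ubar pv uL uR)).
Proof.
  intros xq pv.
  assert (Hdtdx : 0 < dt / dx) by (unfold Rdiv; apply Rmult_lt_0_compat; [|apply Rinv_0_lt_compat]; lra).
  assert (HwQQ : 0 < wGL Q) by (apply Hwpos; lia).
  set (A := 1 - (sa + ss) * dt).
  assert (HA : 0 < A) by (unfold A; nra).
  set (a := dt / dx * / 2).
  assert (Ha : 0 <= a) by (unfold a; lra).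
  assert (Heps : 0 < wGL Q * A - 2 * a) by (unfold a, A in *; lra).
  assert (HB : 0 <= dt * ss) by nra.
  assert (Hub : forall l, (l <= N)%nat -> ubar l = rsum Q (fun q => wGL q * pv q l)).
  { intros l Hl. apply (ubar_id Q yGL wGL Hexact k Hk (c l) xj dx (ubar l) Hdx (Hubar l Hl)). }
  split.
  - intros alpha ff rr Sm Hans Hflux Hcoll Hsrc Hpv HL HR.
    assert (HC : forall q, exists Cpsi, (1 <= q <= Q)%nat ->
       IsCollision T (ansatz N b (alpha (pv q))) Cpsi /\
       forall l, (l <= N)%nat -> IntAB (fun mu => b l mu * Cpsi mu) (-1) 1 (rr (pv q) l)).
    { intros q. destruct (Compare_dec.le_dec 1 q); [destruct (Compare_dec.le_dec q Q)|].
      - destruct (Hcoll _ (Hpv q ltac:(lia))) as [Cp HCp]. exists Cp; auto.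
      - exists (fun _ => 0). intros; lia.
      - exists (fun _ => 0). intros; lia. }
    set (Cq := fun q => proj1_sig (constructive_indefinite_description _ (HC q))).
    assert (HCq : forall q, (1 <= q <= Q)%nat ->
       IsCollision T (ansatz N b (alpha (pv q))) (Cq q) /\
       forall l, (l <= N)%nat -> IntAB (fun mu => b l mu * Cq q mu) (-1) 1 (rr (pv q) l)).
    { intros q Hq. unfold Cq. destruct (constructive_indefinite_description _ (HC q)) as [Cp HCp]. simpl. auto. }
    set (P := fun q => ansatz N b (alpha (pv q))).
    set (PL := ansatz N b (alpha uL)). set (PR := ansatz N b (alpha uR)).
    set (Sq := fun q => Src tn (xq q)).
    set (phi := phiG Q wGL A (dt * ss) dt a P Cq Sq PL PR).
    assert (Hpos : forall mu, -1 <= mu <= 1 -> (wGL Q * A - 2 * a) * P Q mu <= phi mu).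
    { intros mu Hmu. apply phi_pos; auto; try lra.
      - intros; unfold P, ansatz; left; apply exp_pos.
      - intros q Hq. destruct (HCq q Hq) as [Hisc _]. destruct (Hisc mu Hmu) as [g [lo [Hg [Hlo Heq]]]].
        assert (lo = 1) by (apply (IntAB_unique _ _ _ _ _ Hlo (HTnorm mu Hmu))).
        assert (0 <= g).
        { refine (IntAB_nonneg _ (-1) 1 g _ _ Hg); [lra|]. intros x Hx.
          apply Rmult_le_pos; [left; apply HTpos; lra| unfold ansatz; left; apply exp_pos]. }
        unfold P. rewrite Heq. subst lo. lra.
      - intros; apply HS.
      - unfold PL, ansatz; left; apply exp_pos.
      - unfold PR, ansatz; left; apply exp_pos. }
    assert (HPpos : forall q mu, 0 < P q mu) by (intros; unfold P, ansatz; apply exp_pos).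
    assert (Hmom : forall l, (l <= N)%nat -> IntAB (fun mu => b l mu * phi mu) (-1) 1
              (dg_update Q wGL dt dx sa ss ff rr Sm ubar pv uL uR l)).
    { intros l Hl.
      replace (dg_update Q wGL dt dx sa ss ff rr Sm ubar pv uL uR l) with
        (valG Q wGL A (dt*ss) dt a (fun q => pv q l) (fun q => ff (pv q) l) (fun q => rr (pv q) l)
              (fun q => Sm q l) (uL l) (ff uL l) (uR l) (ff uR l)).
      2:{ unfold dg_update, fhat. symmetry. apply (val_id Q wGL sa ss dt dx (fun q => pv q l) (fun q => ff (pv q) l)
              (fun q => rr (pv q) l) (fun q => Sm q l) (uL l) (ff uL l) (uR l) (ff uR l) (ubar l)).
          apply Hub; auto. }
      apply (J_phi (fun f v => IntAB f (-1) 1 v) (IntAB_0 _ _) (fun f g v w l0 H1 H2 => IntAB_lin _ _ f g v w l0 H1 H2)).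
      - intros q Hq. apply (Hans _ (Hpv q Hq) l Hl).
      - intros q Hq. apply (Hflux _ (Hpv q Hq) l Hl).
      - intros q Hq. apply (proj2 (HCq q Hq) l Hl).
      - intros q Hq. apply (Hsrc q Hq l Hl).
      - apply (Hans _ HL l Hl).
      - apply (Hflux _ HL l Hl).
      - apply (Hans _ HR l Hl).
      - apply (Hflux _ HR l Hl).
      - lia. }
    exists phi. split; [|split].
    + intros mu Hmu. pose proof (Hpos mu Hmu). pose proof (HPpos Q mu). nra.
    + set (m := dg_update Q wGL dt dx sa ss ff rr Sm ubar pv uL uR 0%nat).
      assert (Hm : IntAB phi (-1) 1 m).
      { eapply (J_ext (fun f v => IntAB f (-1) 1 v)); [| |apply (Hmom 0%nat ltac:(lia))].
        intros; simpl; rewrite Hb0; ring. reflexivity. }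
      assert (HPQ : IntAB (P Q) (-1) 1 (pv Q 0%nat)).
      { eapply (J_ext (fun f v => IntAB f (-1) 1 v)); [| |apply (Hans _ (Hpv Q ltac:(lia)) 0%nat ltac:(lia))].
        intros; simpl; rewrite Hb0; unfold P; ring. reflexivity. }
      assert (HpvQ : 0 < pv Q 0%nat).
      { destruct (Hpv Q ltac:(lia)) as [ph [_ [[m' [Hm' Hm'pos]] Hmom']]].
        assert (IntAB ph (-1) 1 (pv Q 0%nat)).
        { eapply (J_ext (fun f v => IntAB f (-1) 1 v)); [| |apply (Hmom' 0%nat ltac:(lia))].
          intros; simpl; rewrite Hb0; ring. reflexivity. }
        rewrite <- (IntAB_unique _ _ _ _ _ Hm' H). exact Hm'pos. }
      pose proof (IntAB_lin _ _ _ _ _ _ (- (wGL Q * A - 2 * a)) Hm HPQ) as H2.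
      assert (0 <= m + - (wGL Q * A - 2 * a) * pv Q 0%nat).
      { refine (IntAB_nonneg _ (-1) 1 _ _ _ H2); [lra|]. intros x Hx. simpl.
        pose proof (Hpos x ltac:(lra)). lra. }
      exists m. split; auto. nra.
    + exact Hmom.
  - intros nQ muQ wQ alphaQ HnQ Hmu HwQ HTn Hans Hpv HL HR.
    set (P := fun q => ansatz N b (alphaQ (pv q))).
    set (PL := ansatz N b (alphaQ uL)). set (PR := ansatz N b (alphaQ uR)).
    set (Cq := fun q => collQ T nQ muQ wQ (P q)).
    set (Sq := fun q => Src tn (xq q)).
    set (phi := phiG Q wGL A (dt * ss) dt a P Cq Sq PL PR).
    exists (fun i => phi (muQ i)). split.
    + intros i Hi.
      assert ((wGL Q * A - 2 * a) * P Q (muQ i) <= phi (muQ i)).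
      { apply phi_pos; auto; try lra.
        - intros; unfold P, ansatz; left; apply exp_pos.
        - intros q Hq. unfold Cq, collQ. rewrite (HTn i Hi).
          assert (0 <= rsum nQ (fun i' => wQ i' * T (muQ i) (muQ i') * P q (muQ i'))).
          { apply rsum_nonneg. intros j Hj. apply Rmult_le_pos; [apply Rmult_le_pos|].
            left; auto. left; apply HTpos; apply Hmu; auto. unfold P, ansatz; left; apply exp_pos. }
          lra.
        - intros; apply HS.
        - unfold PL, ansatz; left; apply exp_pos.
        - unfold PR, ansatz; left; apply exp_pos. }
      assert (0 < P Q (muQ i)) by (unfold P, ansatz; apply exp_pos). nra.
    + intros l Hl.
      set (J := fun f v => v = rsum nQ (fun i => wQ i * f (muQ i))).
      assert (J0 : J (fun _ => 0) 0).
      { unfold J. symmetry. rewrite (rsum_ext nQ _ (fun _ => 0)) by (intros; simpl; ring). apply rsum_zero. }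
      assert (Jlin : forall f g v w l0, J f v -> J g w -> J (fun x => f x + l0 * g x) (v + l0 * w)).
      { unfold J. intros f g v w l0 -> ->. rewrite <- rsum_scal, <- rsum_plus. apply rsum_ext; intros; ring. }
      assert (Hansl : forall u, NumRealizable N b nQ muQ wQ u ->
                 J (fun mu => b l mu * ansatz N b (alphaQ u) mu) (u l)).
      { intros u Hu. unfold J. rewrite (Hans u Hu l Hl). apply rsum_ext; intros; ring. }
      assert (Hfl : forall u, J (fun mu => mu * b l mu * ansatz N b (alphaQ u) mu) (fluxQ N b nQ muQ wQ alphaQ u l)).
      { intros u. unfold J, fluxQ. apply rsum_ext; intros; ring. }
      replace (dg_update Q wGL dt dx sa ss (fluxQ N b nQ muQ wQ alphaQ) (collmomQ N b T nQ muQ wQ alphaQ)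
          (srcQ b nQ muQ wQ Src tn xq) ubar pv uL uR l) with
        (valG Q wGL A (dt*ss) dt a (fun q => pv q l) (fun q => fluxQ N b nQ muQ wQ alphaQ (pv q) l)
              (fun q => collmomQ N b T nQ muQ wQ alphaQ (pv q) l)
              (fun q => srcQ b nQ muQ wQ Src tn xq q l) (uL l) (fluxQ N b nQ muQ wQ alphaQ uL l)
              (uR l) (fluxQ N b nQ muQ wQ alphaQ uR l)).
      2:{ unfold dg_update, fhat. symmetry. apply (val_id Q wGL sa ss dt dx (fun q => pv q l)
              (fun q => fluxQ N b nQ muQ wQ alphaQ (pv q) l)
              (fun q => collmomQ N b T nQ muQ wQ alphaQ (pv q) l)
              (fun q => srcQ b nQ muQ wQ Src tn xq q l) (uL l) (fluxQ N b nQ muQ wQ alphaQ uL l)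
              (uR l) (fluxQ N b nQ muQ wQ alphaQ uR l) (ubar l)).
          apply Hub; auto. }
      pose proof (J_phi J J0 Jlin Q wGL A (dt*ss) dt a (b l) P Cq Sq PL PR
              (fun q => pv q l) (fun q => fluxQ N b nQ muQ wQ alphaQ (pv q) l)
              (fun q => collmomQ N b T nQ muQ wQ alphaQ (pv q) l)
              (fun q => srcQ b nQ muQ wQ Src tn xq q l) (uL l) (fluxQ N b nQ muQ wQ alphaQ uL l)
              (uR l) (fluxQ N b nQ muQ wQ alphaQ uR l)) as K.
      unfold J in K. rewrite K.
      + apply rsum_ext; intros; unfold phi; ring.
      + intros q Hq. apply (Hansl _ (Hpv q Hq)).
      + intros q Hq. apply Hfl.
      + intros q Hq. unfold J, collmomQ, Cq, P. apply rsum_ext; intros; ring.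
      + intros q Hq. unfold J, srcQ, Sq. apply rsum_ext; intros; ring.
      + apply (Hansl _ HL).
      + apply Hfl.
      + apply (Hansl _ HR).
      + apply Hfl.
      + lia.
Qed.
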